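(* Let $\mathfrak S$ be a commutative Noetherian semiring. Then for every set $\sigma_{\mathfrak S}$ of ideals of $\mathfrak S$, the space $\sigma_{\mathfrak S}$ with the ideal topology is quasi-compact.
   Context: A semiring $(\mathfrak S,+,0,\cdot,1)$ has $(\mathfrak S,+,0)$ a commutative monoid, $(\mathfrak S,\cdot,1)$ a monoid, $0r=r0=0$, and two-sided distributivity; all semirings are commutative. An ideal is a nonempty proper subset closed under addition and under multiplication by elements of $\mathfrak S$. Noetherian means every ideal is finitely generated (equivalently ascending chain condition on ideals). For an ideal $\mathfrak a$, $\mathfrak a^{\uparrow}=\{\mathfrak x\in\sigma_{\mathfrak S}\mid\mathfrak a\subseteq\mathfrak x\}$; the ideal topology on $\sigma_{\mathfrak S}$ has the sets $\mathfrak a^{\uparrow}$ ($\mathfrak a$ any ideal) as a subbasis of closed sets. Quasi-compact means every open cover has a finite subcover. *)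

(* Defs.v *)
From mathcomp Require Import all_boot all_algebra.
From Stdlib Require List.
Set Implicit Arguments. Unset Strict Implicit. Unset Printing Implicit Defensive.
Import GRing.Theory.
Local Open Scope ring_scope.

Definition is_ideal (S : comPzSemiRingType) (a : S -> Prop) : Prop :=
  (exists x, a x) /\ (exists y, ~ a y) /\
  (forall x y, a x -> a y -> a (x + y)) /\
  (forall r x, a x -> a (r * x)).

Definition fin_gen (S : comPzSemiRingType) (gs : seq S) : S -> Prop :=
  fun x => exists rs : seq S, size rs = size gs /\
    x = \sum_(i < size gs) rs`_i * gs`_i.

Definition finitely_generated (S : comPzSemiRingType) (a : S -> Prop) : Prop :=
  exists gs : seq S, forall x, a x <-> fin_gen gs x.

Definition noetherian (S : comPzSemiRingType) : Prop :=
  forall a : S -> Prop, is_ideal a -> finitely_generated a.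

Definition up_set (S : comPzSemiRingType) (sigma : (S -> Prop) -> Prop)
  (a : S -> Prop) : (S -> Prop) -> Prop :=
  fun x => sigma x /\ (forall s, a s -> x s).

(* Open sets of the ideal topology on sigma: the topology generated by the
   complements (in sigma) of the subbasic closed sets a^up, a any ideal. *)
Inductive ideal_open (S : comPzSemiRingType) (sigma : (S -> Prop) -> Prop) :
    (((S -> Prop) -> Prop) -> Prop) :=
  | io_sub (a : S -> Prop) : is_ideal a ->
      ideal_open sigma (fun x => sigma x /\ ~ up_set sigma a x)
  | io_top : ideal_open sigma sigma
  | io_inter (U V : (S -> Prop) -> Prop) :
      ideal_open sigma U -> ideal_open sigma V ->
      ideal_open sigma (fun x => U x /\ V x)
  | io_union (F : ((S -> Prop) -> Prop) -> Prop) :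
      (forall U, F U -> ideal_open sigma U) ->
      ideal_open sigma (fun x => exists U, F U /\ U x).

Definition ideal_quasi_compact (S : comPzSemiRingType)
  (sigma : (S -> Prop) -> Prop) : Prop :=
  forall F : ((S -> Prop) -> Prop) -> Prop,
    (forall U, F U -> ideal_open sigma U) ->
    (forall x, sigma x -> exists U, F U /\ U x) ->
    exists l : list ((S -> Prop) -> Prop),
      (forall U, List.In U l -> F U) /\
      (forall x, sigma x -> exists U, List.In U l /\ U x).

(* Main.v *)
Require Import Defs.
From mathcomp Require Import all_boot all_algebra.
From mathcomp Require classical_sets.
From Stdlib Require Import Classical.
From Stdlib Require List.
Import List.ListNotations.
Notation In := List.In.
Notation in_app_or := List.in_app_or.
Notation in_or_app := List.in_or_app.

Import GRing.Theory.
Local Open Scope ring_scope.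

Section Proof.
Variable S : comPzSemiRingType.

Definition Cl (x : S -> Prop) : Prop :=
  x 0 /\ (forall a b, x a -> x b -> x (a + b)) /\ (forall r a, x a -> x (r * a)).

Lemma ideal_Cl x : is_ideal x -> Cl x.
Proof.
move=> [[e He] [_ [Hadd Hmul]]]; split; last by split.
by rewrite -(mul0r e); apply: Hmul.
Qed.

Lemma fin_gen_Cl (gs : seq S) (x : S -> Prop) :
  Cl x -> (forall i, (i < size gs)%N -> x gs`_i) -> forall g, fin_gen gs g -> x g.
Proof.
move=> [H0 [Hadd Hmul]] Hg g [rs [_ ->]].
apply: (big_ind (fun v => x v)) => //= i _.
by apply: Hmul; apply: Hg.
Qed.

Lemma fin_gen_nth (gs : seq S) i : (i < size gs)%N -> fin_gen gs gs`_i.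
Proof.
move=> Hi; exists (mkseq (fun j => if j == i then 1 else 0) (size gs)).
rewrite size_mkseq; split => //.
rewrite (bigD1 (Ordinal Hi)) //= nth_mkseq // eqxx mul1r big1 ?addr0 //.
move=> j Hj; rewrite nth_mkseq //.
have -> : (nat_of_ord j == i) = false.
  by apply/negbTE; apply: contra Hj => /eqP Hji; apply/eqP/val_inj.
by rewrite mul0r.
Qed.

Variable A' : (S -> Prop) -> Prop.

Definition J (s : S) : Prop :=
  exists Ls : list (S -> Prop), (forall a, In a Ls -> A' a) /\
    forall x, Cl x -> (forall a, In a Ls -> forall t, a t -> x t) -> x s.

Lemma J0 : J 0.
Proof. by exists nil; split => // x [H0 _]. Qed.

Lemma JD s t : J s -> J t -> J (s + t).
Proof.
move=> [L1 [H1 K1]] [L2 [H2 K2]]; exists (L1 ++ L2); split.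
  by move=> a Ha; case: (in_app_or _ _ _ Ha) => ?; [apply: H1|apply: H2].
move=> x Cx Hx; have [_ [Hadd _]] := Cx; apply: Hadd.
  by apply: K1 => // a Ha; apply: Hx; apply: in_or_app; left.
by apply: K2 => // a Ha; apply: Hx; apply: in_or_app; right.
Qed.

Lemma JM r s : J s -> J (r * s).
Proof.
move=> [L1 [H1 K1]]; exists L1; split => // x Cx Hx.
by have [_ [_ Hm]] := Cx; apply: Hm; apply: K1.
Qed.

Lemma Jsub a : A' a -> forall t, a t -> J t.
Proof.
move=> Ha t Hat; exists (a :: nil); split; first by move=> b [<-|[]].
by move=> x _ Hx; apply: (Hx a) => //; left.
Qed.

Lemma J_combine n (f : nat -> S) : (forall i, (i < n)%N -> J (f i)) ->
  exists Ls : list (S -> Prop), (forall a, In a Ls -> A' a) /\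
    forall x, Cl x -> (forall a, In a Ls -> forall t, a t -> x t) ->
      forall i, (i < n)%N -> x (f i).
Proof.
elim: n => [|n IH] Hf.
  by exists nil; split => // x _ _ i.
have [L1 [H1 K1]] := IH (fun i Hi => Hf i (ltnW Hi)).
have [L2 [H2 K2]] := Hf n (ltnSn n).
exists (L1 ++ L2); split.
  by move=> a Ha; case: (in_app_or _ _ _ Ha) => ?; [apply: H1|apply: H2].
move=> x Cx Hx i; rewrite ltnS leq_eqVlt => /orP [/eqP ->|Hi].
  by apply: K2 => // a Ha; apply: Hx; apply: in_or_app; right.
by apply: K1 => // a Ha; apply: Hx; apply: in_or_app; left.
Qed.

End Proof.
Arguments Cl {S} x.
Arguments ideal_Cl {S x}.
Arguments fin_gen_Cl {S gs x}.
Arguments fin_gen_nth {S gs i}.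
Arguments J {S} A' s.
Arguments J0 {S A'}.
Arguments JD {S A' s t}.
Arguments JM {S A'} r {s}.
Arguments Jsub {S A' a}.
Arguments J_combine {S} A' n f.


Section Topo.
Variable S : comPzSemiRingType.
Variable sigma : (S -> Prop) -> Prop.
Variable M : ((S -> Prop) -> Prop) -> Prop.

Definition covers (l : list ((S -> Prop) -> Prop)) :=
  forall x, sigma x -> exists U, In U l /\ U x.

Definition Dset (a : S -> Prop) := fun x => sigma x /\ ~ up_set sigma a x.

Lemma filter_list (P Q : ((S -> Prop) -> Prop) -> Prop) l' :
  (forall V, In V l' -> P V \/ Q V) ->
  exists l, (forall V, In V l -> P V) /\ forall V, In V l' -> Q V \/ In V l.
Proof.
elim: l' => [|W l' IH] H.
  by exists nil; split => // V [].
have [l [H1 H2]] := IH (fun V HV => H V (or_intror HV)).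
case: (H W (or_introl erefl)) => HW.
  exists (W :: l); split; first by move=> V [<-|HV] //; apply: H1.
  move=> V [<-|HV]; first by right; left.
  by case: (H2 V HV) => ?; [left|right; right].
exists l; split => // V [<-|HV]; first by left.
exact: H2.
Qed.

Lemma cov_ind
  (Hmax : forall U, ~ M U -> exists l, (forall V, In V l -> M V \/ V = U) /\ covers l) :
  forall U, ideal_open sigma U -> forall x, U x ->
   (~ exists a, is_ideal a /\ M (Dset a) /\ Dset a x) ->
   exists l, (forall V, In V l -> M V) /\
     forall y, sigma y -> U y \/ exists V, In V l /\ V y.
Proof.
move=> U; elim=> [a Ha|| U1 V1 _ IHU _ IHV | F' _ IH] x Hx Hn.
- case: (classic (M (Dset a))) => HM.
    by exfalso; apply: Hn; exists a.
  have [l' [Hl' Hc]] := Hmax _ HM.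
  have [l [H1 H2]] := filter_list _ _ _ Hl'.
  exists l; split => // y Hy.
  have [V [HV Vy]] := Hc y Hy.
  case: (H2 V HV) => [E|HVl]; first by left; rewrite E in Vy.
  by right; exists V.
- by exists nil; split => // y Hy; left.
- case: Hx => Hx1 Hx2.
  have [l1 [H1 K1]] := IHU x Hx1 Hn.
  have [l2 [H2 K2]] := IHV x Hx2 Hn.
  exists (l1 ++ l2); split.
    by move=> V HV; case: (in_app_or _ _ _ HV) => ?; [apply: H1|apply: H2].
  move=> y Hy; case: (K1 y Hy) => [Hy1|[V [HV Vy]]]; last first.
    by right; exists V; split => //; apply: in_or_app; left.
  case: (K2 y Hy) => [Hy2|[V [HV Vy]]]; first by left.
  by right; exists V; split => //; apply: in_or_app; right.
- case: Hx => W [FW Wx].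
  have [l [H1 K1]] := IH W FW x Wx Hn.
  exists l; split => // y Hy; case: (K1 y Hy) => [Wy|?]; last by right.
  by left; exists W.
Qed.

End Topo.
Arguments covers {S} sigma l.
Arguments Dset {S} sigma a x.
Arguments cov_ind {S sigma M}.

Lemma chain_list (T : Type) (F : T -> Prop) (Fc : (T -> Prop) -> Prop)
  (Htot : forall s t, Fc s -> Fc t -> (forall u, s u -> t u) \/ (forall u, t u -> s u))
  (l : list T) :
  (forall U, In U l -> F U \/ exists2 X, Fc X & X U) ->
  (forall U, In U l -> F U) \/ exists X, Fc X /\ forall U, In U l -> F U \/ X U.
Proof.
elim: l => [|W l IH] H; first by left => U [].
case: (IH (fun U HU => H U (or_intror HU))) => [H1|[X [FX HX]]].
- case: (H W (or_introl erefl)) => [FW|[X FX XW]].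
    by left => U [<-|HU] //; apply: H1.
  by right; exists X; split => // U [<-|HU]; [right|left; apply: H1].
- case: (H W (or_introl erefl)) => [FW|[Y FY YW]].
    by right; exists X; split => // U [<-|HU]; [left|apply: HX].
  case: (Htot X Y FX FY) => HXY.
    right; exists Y; split => // U [<-|HU]; first by right.
    by case: (HX U HU) => ?; [left|right; apply: HXY].
  right; exists X; split => // U [<-|HU]; first by right; apply: HXY.
  exact: HX.
Qed.

Theorem theorem3p7 (S : comPzSemiRingType) :
  noetherian S ->
  forall sigma : (S -> Prop) -> Prop,
    (forall x, sigma x -> is_ideal x) ->
    ideal_quasi_compact sigma.
Proof.
move=> Hnoeth sigma Hsig F HF Hcov; apply: NNPP => Hno.
pose P := fun C : ((S -> Prop) -> Prop) -> Prop =>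
  ~ exists l, (forall U, In U l -> F U \/ C U) /\ covers sigma l.
have [A [PA Amax]] : exists A, P A /\ forall B, classical_sets.proper A B -> ~ P B.
  apply: classical_sets.Zorn_bigcup => Fc FcP Htot [l [Hl Hc]].
  have := @chain_list _ F Fc Htot l.
  case.
  + move=> U HU; case: (Hl U HU) => [?|[X FX XU]]; [left|right; exists X] => //.
  + by move=> H; apply: Hno; exists l; split.
  + move=> [X [FX HX]]; apply: (FcP X FX); exists l; split => //.
  pose M := fun U => F U \/ A U.
  have Hmax : forall U, ~ M U ->
      exists l, (forall V, In V l -> M V \/ V = U) /\ covers sigma l.
    move=> U HU.
    have HB : ~ P (fun V => A V \/ V = U).
      apply: Amax; split; first by move=> V HV; left.
      by move=> /(_ U (or_intror erefl)) HA; apply: HU; right.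
    have [l [Hl Hc]] := NNPP _ HB.
    exists l; split => // V HV.
    by case: (Hl V HV) => [?|[?|?]]; [left; left|left; right|right].
  have Hsub : forall x, sigma x ->
      exists a, is_ideal a /\ M (Dset sigma a) /\ Dset sigma a x.
    move=> x Hx; apply: NNPP => Hn.
    have [U [FU Ux]] := Hcov x Hx.
    have [l [Hl Hc]] := cov_ind Hmax _ (HF U FU) _ Ux Hn.
    apply: PA; exists (U :: l); split.
      by move=> V [<-|HV]; [left|apply: Hl].
    move=> y Hy; case: (Hc y Hy) => [Uy|[V [HV Vy]]].
      by exists U; split => //; left.
    by exists V; split => //; right.
  pose A' := fun a => is_ideal a /\ M (Dset sigma a).
  suff [Ls [HLs HK]] : exists Ls : list (S -> Prop), (forall a, In a Ls -> A' a) /\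
      forall x, sigma x -> (forall a, In a Ls -> forall t, a t -> x t) -> False.
    apply: PA; exists (List.map (Dset sigma) Ls); split.
      move=> U /List.in_map_iff [a [<- Ha]].
      by have [_ []] := HLs a Ha; [left|right].
    move=> x Hx.
    have [a [Ha Hna]] : exists a, In a Ls /\ ~ (forall t, a t -> x t).
      apply: NNPP => Hn; apply: (HK x Hx) => a Ha t at_.
      apply: NNPP => Hxt; apply: Hn; exists a; split => // Hall.
      by apply: Hxt; apply: Hall.
    exists (Dset sigma a); split; first exact: List.in_map.
    by split => // [[_ Hup]]; apply: Hna.
  case: (classic (exists y, ~ J A' y)) => [[y Hy]|Hall].
  - have HJ : is_ideal (J A').
      split; first by exists 0; apply: J0.
      split; first by exists y.
      by split; [move=> ? ? ; apply: JD|move=> ? ?; apply: JM].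
    have [gs Hgs] := Hnoeth _ HJ.
    have [Ls [HLs HK]] := @J_combine S A' (size gs) (fun i => gs`_i)
      (fun i Hi => proj2 (Hgs _) (fin_gen_nth Hi)).
    exists Ls; split => // x Hx Hsx.
    have Cx := ideal_Cl (Hsig x Hx).
    have [a [Ha [HMa [_ Hnot]]]] := Hsub x Hx.
    apply: Hnot; split => // t at_.
    apply: (fin_gen_Cl Cx (HK x Cx Hsx)).
    by apply/Hgs; apply: (@Jsub S A' a (conj Ha HMa) t at_).
  - have [Ls [HLs HK]] : J A' 1.
      by apply: NNPP => H1; apply: Hall; exists 1.
    exists Ls; split => // x Hx Hsx.
    have Cx := ideal_Cl (Hsig x Hx).
    have x1 := HK x Cx Hsx.
    have [_ [[z Hz] [_ Hm]]] := Hsig x Hx.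
    by apply: Hz; rewrite -(mulr1 z); apply: Hm.
Qed.
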